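(* Let $n\ge1$, $k\ge1$, and let $D_{n,k}:B_{n+k}\to B_n$ be the homomorphism of binary De Bruijn digraphs induced by a Boolean function $d_k(x_1,\ldots,x_{k+1})$. Then $D_{n,k}$ has property (D) if and only if $$d_k(x_1,\ldots,x_{k+1})=x_1+h(x_2,\ldots,x_k)+x_{k+1}\pmod 2$$ for some Boolean function $h$ of the $k-1$ variables $x_2,\ldots,x_k$ (a constant when $k=1$).
   Context: $B_m=B_m(2)$ is the binary De Bruijn digraph with vertex set $\{0,1\}^m$ and an edge from $(x_1,\ldots,x_m)$ to $(y_1,\ldots,y_m)$ iff $y_i=x_{i+1}$ for $i=1,\ldots,m-1$. The homomorphism induced by $d_k$ is $D_{n,k}(x_1,\ldots,x_{n+k})=(d_k(x_1,\ldots,x_{k+1}),\ldots,d_k(x_n,\ldots,x_{n+k}))$. A cycle of length $l$ in $B_n$ is a cyclic sequence $[c_1,\ldots,c_l]$ with vertices the windows $(c_j,\ldots,c_{j+n-1})$, indices mod $l$; it is vertex-disjoint if these windows are distinct. Property (D): for every vertex-disjoint cycle $[c_1,\ldots,c_l]$ in $B_n$ and every $w\in\{0,1\}^k$ there is exactly one sequence $(x_1,\ldots,x_{k+l+n-1})$ with $(x_1,\ldots,x_k)=w$ and $d_k(x_j,\ldots,x_{j+k})=c_j$ (index of $c$ mod $l$) for $j=1,\ldots,l+n-1$; and over all $2^k$ choices of $w$ the $2^k l$ words $(x_j,\ldots,x_{j+n+k-1})$, $j=1,\ldots,l$, are pairwise distinct. *)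

(* Defs.v *)
From mathcomp Require Import all_boot.
Set Implicit Arguments. Unset Strict Implicit. Unset Printing Implicit Defensive.

(* Conventions: everything is 0-indexed.  A cyclic sequence
   [c_1,...,c_l] is a seq bool c of size l > 0, with c_j read as
   nth false c (j mod l). *)

(* the j-th vertex (window of length n) of the cycle c in B_n, j < size c *)
Definition cycle_window (n : nat) (c : seq bool) (j : nat) : seq bool :=
  [seq nth false c ((j + i) %% size c) | i <- iota 0 n].

Definition vertex_disjoint (n : nat) (c : seq bool) : bool :=
  uniq [seq cycle_window n c j | j <- iota 0 (size c)].

Definition dwin (k : nat) (x : seq bool) (j : nat) : k.+1.-tuple bool :=
  [tuple nth false x (j + i) | i < k.+1].

Definition admissible (n k : nat) (d : k.+1.-tuple bool -> bool)
    (c : seq bool) (w : seq bool) (x : seq bool) : Prop :=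
  [/\ size x = k + size c + n - 1,
      take k x = w &
      forall j, j < size c + n - 1 -> d (dwin k x j) = nth false c (j %% size c)].

Definition xword (n k : nat) (x : seq bool) (j : nat) : seq bool :=
  take (n + k) (drop j x).

Definition propD (n k : nat) (d : k.+1.-tuple bool -> bool) : Prop :=
  forall c : seq bool, 0 < size c -> vertex_disjoint n c ->
    (forall w : seq bool, size w = k -> exists! x, admissible n d c w x) /\
    (forall (w1 w2 x1 x2 : seq bool) (j1 j2 : nat),
        size w1 = k -> size w2 = k ->
        admissible n d c w1 x1 -> admissible n d c w2 x2 ->
        j1 < size c -> j2 < size c ->
        xword n k x1 j1 = xword n k x2 j2 -> w1 = w2 /\ j1 = j2).

(* Main.v *)
From Stdlib Require Import Lia.
Require Import Defs.
From mathcomp Require Import all_boot.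
Set Implicit Arguments. Unset Strict Implicit. Unset Printing Implicit Defensive.
Ltac mlia := repeat match goal with
 | H : is_true (_ && _) |- _ => let H1 := fresh "H" in let H2 := fresh "H" in destruct (andP H) as [H1 H2]; clear H
 | H : is_true (leq _ _) |- _ => apply (elimT leP) in H
 | H : is_true (negb (leq _ _)) |- _ => rewrite -ltnNge in H; apply (elimT leP) in H
 | H : is_true (_ == _) |- _ => apply (elimT eqP) in H
 | |- is_true (leq _ _) => apply/leP
 | |- is_true (_ && _) => apply/andP; split
 | H : context [addn] |- _ => rewrite -plusE in H | |- context [addn] => rewrite -plusE
 | H : context [subn] |- _ => rewrite -minusE in H | |- context [subn] => rewrite -minusE
 | H : context [muln] |- _ => rewrite -multE in H | |- context [muln] => rewrite -multE
 end; lia.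

Definition FLp k (d : k.+1.-tuple bool -> bool) := forall t t' : k.+1.-tuple bool,
  (forall i : 'I_k.+1, i < k -> tnth t i = tnth t' i) ->
  d t' = d t (+) tnth t ord_max (+) tnth t' ord_max.
Definition FFp k (d : k.+1.-tuple bool -> bool) := forall t t' : k.+1.-tuple bool,
  (forall i : 'I_k.+1, 0 < i -> tnth t i = tnth t' i) ->
  d t' = d t (+) tnth t ord0 (+) tnth t' ord0.

Lemma tnth_dwin k x j (i : 'I_k.+1) : tnth (dwin k x j) i = nth false x (j + i).
Proof. by rewrite /dwin tnth_mktuple. Qed.

Lemma agree_fwd n k (d : k.+1.-tuple bool -> bool) c w1 w2 x y a :
  FLp d -> admissible n d c w1 x -> admissible n d c w2 y ->
  (forall p, a <= p < a + k -> nth false x p = nth false y p) ->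
  forall p, a <= p -> p < k + (size c + n - 1) -> nth false x p = nth false y p.
Proof.
move=> FL [sx _ ex] [sy _ ey] hag.
suff H: forall m q, q < m -> a <= q -> q < k + (size c + n - 1) -> nth false x q = nth false y q.
  by move=> p; apply: (H p.+1).
elim=> // m IH q hqm haq hq.
case: (ltnP q (a + k)) => hqa; first by apply: hag; rewrite haq hqa.
have hq' : q = (q - k) + k by mlia.
set j := q - k in hq'.
have hjL : j < size c + n - 1 by rewrite /j; mlia.
have E := FL (dwin k x j) (dwin k y j).
rewrite !tnth_dwin /= ex // ey // in E.
have <- : j + k = q by rewrite hq'.
suff Hw : forall i : 'I_k.+1, i < k -> tnth (dwin k x j) i = tnth (dwin k y j) i.
  move: (E Hw); case: (nth false x (j+k)); case: (nth false y (j+k)); 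
  by case: (nth false c _).
move=> i hi; rewrite !tnth_dwin; apply: IH; rewrite /j; mlia.
Qed.

Lemma agree_bwd n k (d : k.+1.-tuple bool -> bool) c w1 w2 x y a :
  FFp d -> admissible n d c w1 x -> admissible n d c w2 y -> a <= size c + n - 1 ->
  (forall p, a <= p < a + k -> nth false x p = nth false y p) ->
  forall p, p < a + k -> nth false x p = nth false y p.
Proof.
move=> FF [sx _ ex] [sy _ ey] haL hag.
suff H: forall q, q <= a -> forall p, a - q <= p < a + k -> nth false x p = nth false y p.
  by move=> p hp; apply: (H a (leqnn a)); rewrite subnn hp.
elim=> [|q IH] hq p /andP [h1 h2]; first by apply: hag; rewrite subn0 in h1; rewrite h1 h2.
case: (ltnP p (a - q)) => hpq; last by apply: IH; [mlia | rewrite hpq h2].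
have hp : p = a - q.+1 by mlia.
have hjL : p < size c + n - 1 by mlia.
have E := FF (dwin k x p) (dwin k y p).
rewrite !tnth_dwin /= addn0 ex // ey // in E.
suff Hw : forall i : 'I_k.+1, 0 < i -> tnth (dwin k x p) i = tnth (dwin k y p) i.
  move: (E Hw); case: (nth false x p); case: (nth false y p);
  by case: (nth false c _).
move=> i hi; rewrite !tnth_dwin; apply: IH; first by mlia.
have := ltn_ord i => hi2; mlia.
Qed.

Lemma agree_all n k (d : k.+1.-tuple bool -> bool) c w1 w2 x y a :
  FLp d -> FFp d -> admissible n d c w1 x -> admissible n d c w2 y ->
  a <= size c + n - 1 ->
  (forall p, a <= p < a + k -> nth false x p = nth false y p) ->
  forall p, p < k + (size c + n - 1) -> nth false x p = nth false y p.
Proof.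
move=> FL FF ax ay haL hag p hp.
case: (ltnP p (a + k)) => h.
  exact: (agree_bwd FF ax ay haL hag).
apply: (agree_fwd FL ax ay hag) => //; mlia.
Qed.

Fixpoint ext k (d : k.+1.-tuple bool -> bool) (c w : seq bool) (j : nat) : seq bool :=
  match j with
  | 0 => w
  | j'.+1 => let s := ext d c w j' in
      rcons s (d (dwin k (rcons s true) j') == nth false c (j' %% size c))
  end.

Lemma size_ext k (d : k.+1.-tuple bool -> bool) c w j : size (ext d c w j) = size w + j.
Proof. by elim: j => [|j IH] /=; rewrite ?addn0 // size_rcons IH addnS. Qed.

Lemma nth_ext k (d : k.+1.-tuple bool -> bool) c w m m' p :
  m <= m' -> p < size w + m -> nth false (ext d c w m') p = nth false (ext d c w m) p.
Proof.
elim: m' => [|m' IH] hm hp; first by rewrite leqn0 in hm; rewrite (eqP hm).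
case: (ltnP m m'.+1) => h; last by have -> : m = m'.+1 by mlia.
rewrite /= nth_rcons size_ext.
have -> : p < size w + m' by mlia.
by apply: IH; mlia.
Qed.

Lemma ext_step k (d : k.+1.-tuple bool -> bool) c w j : FLp d -> size w = k ->
  d (dwin k (ext d c w j.+1) j) = nth false c (j %% size c).
Proof.
move=> FL sw /=.
set s := ext d c w j.
set tg := nth false c _.
set e := (d _ == tg).
have E := FL (dwin k (rcons s true) j) (dwin k (rcons s e) j).
rewrite !tnth_dwin /= !nth_rcons /s size_ext sw in E.
rewrite addnC ltnn eqxx in E.
rewrite -/s E; last first.
  move=> i hi; rewrite !tnth_dwin !nth_rcons /s size_ext sw.
  by have -> : j + i < k + j by mlia.
by rewrite /e /tg; case: (d _); case: (nth _ _ _).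
Qed.

Lemma ext_adm n k (d : k.+1.-tuple bool -> bool) c w : FLp d -> 1 <= n -> size w = k ->
  admissible n d c w (ext d c w (size c + n - 1)).
Proof.
move=> FL hn sw; split.
- rewrite size_ext sw; mlia.
- apply: (@eq_from_nth _ false); first by rewrite size_take size_ext sw; case: ifP => // /negbT h; mlia.
  move=> i; rewrite size_take size_ext sw => hi.
  have hik : i < k by move: hi; case: ifP => // /negbT h hi; mlia.
  rewrite nth_take // (@nth_ext _ _ _ _ 0) //; mlia.
- move=> j hj; rewrite -(ext_step c j FL sw); congr d.
  apply: eq_from_tnth => i; rewrite !tnth_dwin (@nth_ext _ _ _ _ j.+1) //; idtac. all: try (have := ltn_ord i => hi); rewrite ?sw. all: mlia. Qed.

Lemma nth_xword n k x j i : i < n + k -> nth false (xword n k x j) i = nth false x (j + i).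
Proof. by move=> hi; rewrite /xword nth_take // nth_drop. Qed.

Lemma FL_FF_propD n k (d : k.+1.-tuple bool -> bool) : 1 <= n -> FLp d -> FFp d -> propD n d.
Proof.
move=> hn FL FF c hc vd; split.
  move=> w sw; exists (ext d c w (size c + n - 1)); split; first exact: ext_adm.
  move=> y ay; have ax := ext_adm c FL hn sw.
  have [sx tx _] := ax; have [sy ty _] := ay.
  apply: (@eq_from_nth _ false); first by rewrite sx sy.
  move=> p; rewrite sx => hp.
  apply: (agree_fwd FL ax ay (a := 0)) => //; last by mlia.
  move=> q /andP [_ hq]; by rewrite -(nth_take _ hq) tx -ty nth_take.
move=> w1 w2 x1 x2 j1 j2 s1 s2 a1 a2 hj1 hj2 hxw.
have [sx1 tx1 ex1] := a1; have [sx2 tx2 ex2] := a2.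
have hw : forall i, i < n + k -> nth false x1 (j1 + i) = nth false x2 (j2 + i).
  by move=> i hi; rewrite -!(@nth_xword n k) // hxw.
have ej : j1 = j2.
  have Hc : cycle_window n c j1 = cycle_window n c j2.
    rewrite /cycle_window; apply/eq_in_map => i; rewrite mem_iota add0n => hi.
    have hi' : i < n by mlia.
    have -> : nth false c ((j1 + i) %% size c) = d (dwin k x1 (j1 + i)) by rewrite ex1 //; mlia.
    have -> : nth false c ((j2 + i) %% size c) = d (dwin k x2 (j2 + i)) by rewrite ex2 //; mlia.
    congr d; apply: eq_from_tnth => t; rewrite !tnth_dwin -!addnA hw //.
    have := ltn_ord t => ht; mlia.
  move: vd; rewrite /vertex_disjoint => vd.
  have := nth_uniq [::] (i := j1) (j := j2) _ _ vd.
  rewrite size_map size_iota => /(_ hj1 hj2).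
  rewrite !(nth_map 0) ?size_iota // !nth_iota // !add0n Hc eqxx.
  by move/esym/eqP.
subst j2; split => //.
have hall := agree_all FL FF a1 a2 (a := j1) ltac:(mlia).
rewrite -tx1 -tx2; apply: (@eq_from_nth _ false); first by rewrite !size_take sx1 sx2.
move=> i; rewrite size_take => hi.
have hik : i < k by move: hi; case: ifP => // /negbT h hi; mlia.
rewrite !nth_take // hall //. all: try (move=> p /andP [h1 h2]; have -> : p = j1 + (p - j1) by mlia).
  by apply: hw; mlia.
exact: ltn_addr.
Qed.

Lemma nth_tnth m (t : m.-tuple bool) j (hj : j < m) : nth false t j = tnth t (Ordinal hj).
Proof. by rewrite (tnth_nth false). Qed.

Lemma tup_ext_last k (t t' : k.+1.-tuple bool) :
  (forall i : 'I_k.+1, i < k -> tnth t i = tnth t' i) -> tnth t ord_max = tnth t' ord_max -> t = t'.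
Proof.
move=> H Hm; apply: eq_from_tnth => i; case: (ltnP i k) => h; first exact: H.
have -> : i = ord_max by apply/val_inj => /=; have := ltn_ord i => hi; mlia.
exact: Hm.
Qed.

Lemma tup_ext_first k (t t' : k.+1.-tuple bool) :
  (forall i : 'I_k.+1, 0 < i -> tnth t i = tnth t' i) -> tnth t ord0 = tnth t' ord0 -> t = t'.
Proof.
move=> H Hm; apply: eq_from_tnth => i; case: (posnP i) => h; last exact: H.
have -> : i = ord0 by apply/val_inj => /=; rewrite h.
exact: Hm.
Qed.

Definition mid k (x : k.+1.-tuple bool) : k.-1.-tuple bool := [tuple nth false x i.+1 | i < k.-1].

Lemma form_FL k (d : k.+1.-tuple bool -> bool) h : 1 <= k ->
  (forall x, d x = tnth x ord0 (+) h (mid x) (+) tnth x ord_max) -> FLp d.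
Proof.
move=> hk Hd t t' H; rewrite !Hd.
have -> : mid t' = mid t.
  apply: eq_from_tnth => i; rewrite !tnth_mktuple.
  have hi : i.+1 < k.+1 by have := ltn_ord i => hi; mlia.
  rewrite !(nth_tnth _ hi) H //=; have := ltn_ord i => hi2; mlia.
have -> : tnth t' ord0 = tnth t ord0 by rewrite H.
by case: (tnth t ord0); case: (h _); case: (tnth t ord_max); case: (tnth t' ord_max).
Qed.

Lemma form_FF k (d : k.+1.-tuple bool -> bool) h : 1 <= k ->
  (forall x, d x = tnth x ord0 (+) h (mid x) (+) tnth x ord_max) -> FFp d.
Proof.
move=> hk Hd t t' H; rewrite !Hd.
have -> : mid t' = mid t.
  apply: eq_from_tnth => i; rewrite !tnth_mktuple.
  have hi : i.+1 < k.+1 by have := ltn_ord i => hi; mlia.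
  by rewrite !(nth_tnth _ hi) H.
have -> : tnth t' ord_max = tnth t ord_max by rewrite H.
by case: (tnth t ord0); case: (h _); case: (tnth t ord_max); case: (tnth t' ord0).
Qed.

Lemma FL_FF_form k (d : k.+1.-tuple bool -> bool) : 1 <= k -> FLp d -> FFp d ->
  exists h : k.-1.-tuple bool -> bool, forall x,
    d x = tnth x ord0 (+) h [tuple nth false x i.+1 | i < k.-1] (+) tnth x ord_max.
Proof.
move=> hk FL FF.
pose mk (m : k.-1.-tuple bool) : k.+1.-tuple bool :=
  [tuple if (i : nat) == 0 then false else if (i : nat) == k then false else nth false m i.-1 | i < k.+1].
exists (fun m => d (mk m)) => x.
pose z : k.+1.-tuple bool := [tuple if (i : nat) == 0 then false else tnth x i | i < k.+1].
have E1 := FF x z.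
have E2 := FL z (mk (mid x)).
rewrite !tnth_mktuple /= in E1 E2.
have hk0 : (k == 0) = false by case: (k) hk.
rewrite hk0 eqxx in E2. rewrite -/(mid x).
rewrite E2 ?E1.
- by case: (d x); case: (tnth x ord0); case: (tnth x ord_max).
- by move=> i hi; rewrite tnth_mktuple; have -> : (i : nat) == 0 = false by case: (nat_of_ord i) hi.
move=> i hi; rewrite !tnth_mktuple; case: eqP => // hi0.
have -> : (i : nat) == k = false by apply/eqP; mlia.
have hi' : i.-1 < k.-1 by mlia.
rewrite (nth_tnth _ hi') tnth_mktuple /=.
have hi2 : i.-1.+1 < k.+1 by mlia.
rewrite (nth_tnth _ hi2) ; congr tnth; apply/val_inj => /=; mlia.
Qed.

Lemma size_take_tup k (t : k.+1.-tuple bool) : size (take k t) = k.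
Proof. by rewrite size_take size_tuple ltnSn. Qed.

Lemma win0_agree n k (d : k.+1.-tuple bool -> bool) c (t : k.+1.-tuple bool) x :
  admissible n d c (take k t) x ->
  forall i : 'I_k.+1, i < k -> tnth (dwin k x 0) i = tnth t i.
Proof.
move=> [_ tx _] i hi; rewrite tnth_dwin add0n -(nth_take _ hi) tx nth_take //.
by rewrite (tnth_nth false).
Qed.

Lemma propD_FL n k (d : k.+1.-tuple bool -> bool) : 1 <= n -> propD n d -> FLp d.
Proof.
move=> hn PD.
have flip : forall t : k.+1.-tuple bool, exists t'' : k.+1.-tuple bool,
    (forall i : 'I_k.+1, i < k -> tnth t'' i = tnth t i) /\ d t'' = ~~ d t.
  move=> t.
  have [ex _] := PD [:: ~~ d t] erefl (erefl true).
  have [x [ax _]] := ex (take k t) (size_take_tup t).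
  exists (dwin k x 0); split; first exact: (win0_agree ax).
  by have [_ _ e] := ax; rewrite e //=; mlia.
move=> t t' H.
case: (eqVneq (tnth t ord_max) (tnth t' ord_max)) => hm.
  have <- := tup_ext_last H hm.
  by rewrite hm; case: (d _); case: (tnth _ _).
have [t'' [H'' e'']] := flip t.
have hm'' : tnth t'' ord_max = tnth t' ord_max.
  case: (eqVneq (tnth t'' ord_max) (tnth t ord_max)) => h2.
    by have E := tup_ext_last H'' h2; rewrite E in e''; case: (d t) e''.
  by move: hm h2; case: (tnth t _); case: (tnth t' _); case: (tnth t'' _).
have -> : t' = t''.
  apply: tup_ext_last => // i hi; rewrite H'' // H //.
rewrite e''; move: hm; rewrite -hm''.
by case: (d t); case: (tnth t _); case: (tnth t'' _).
Qed.

Lemma vd2 n b : 1 <= n -> vertex_disjoint n [:: b; ~~ b].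
Proof.
case: n => // n _; rewrite /vertex_disjoint /cycle_window /=.
by rewrite andbT inE; case: b.
Qed.

Lemma propD_FF n k (d : k.+1.-tuple bool -> bool) : 1 <= n -> 1 <= k -> propD n d -> FFp d.
Proof.
move=> hn hk PD.
have FL := propD_FL hn PD.
have claim : forall t t' : k.+1.-tuple bool, (forall i : 'I_k.+1, 0 < i -> tnth t i = tnth t' i) ->
    d t = d t' -> tnth t ord0 = tnth t' ord0.
  move=> t t' H edt.
  have [ex dis] := PD [:: d t; ~~ d t] erefl (vd2 (d t) hn).
  have [x1 [a1 _]] := ex (take k t) (size_take_tup t).
  have [x2 [a2 _]] := ex (take k t') (size_take_tup t').
  have hlast : forall (s : k.+1.-tuple bool) x, d s = d t -> admissible n d [:: d t; ~~ d t] (take k s) x ->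
      nth false x k = tnth s ord_max.
    move=> s x es ax.
    have E := FL (dwin k x 0) s (win0_agree ax).
    have [_ _ e] := ax; rewrite e /= in E; last by mlia.
    rewrite tnth_dwin /= es in E.
    by move: E; case: (d t); case: (nth _ _ _); case: (tnth s _).
  have hw : xword n k x1 1 = xword n k x2 1.
    have [sx1 _ _] := a1; have [sx2 _ _] := a2.
    apply: (@eq_from_nth _ false); first by rewrite /xword !size_take !size_drop sx1 sx2.
    move=> i; rewrite /xword size_take size_drop sx1 => hi.
    have hi' : i < n + k by move: hi; case: ifP => // /negbT h hi; mlia.
    rewrite -/(xword n k x1 1) -/(xword n k x2 1) !nth_xword //.
    apply: (agree_fwd FL a1 a2 (a := 1)); last by rewrite /=; mlia.
    + move=> p /andP [hp1 hp2].
      case: (ltnP p k) => hpk.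
        have [_ t1 _] := a1; have [_ t2 _] := a2.
        rewrite -(nth_take _ hpk) t1 -[in RHS](nth_take _ hpk) t2 !nth_take //.
        by rewrite !(nth_tnth _ (leqW hpk)) /= H.
      have -> : p = k by mlia.
      rewrite (hlast t) // (hlast t') // H //.
    + mlia.
  have [ew _] := dis _ _ _ _ 1 1 (size_take_tup t) (size_take_tup t') a1 a2 erefl erefl hw.
  have := congr1 (fun s => nth false s 0) ew => /=.
  rewrite !nth_take // (nth_tnth _ (ltn0Sn k)) (nth_tnth _ (ltn0Sn k)).
  by have -> : Ordinal (ltn0Sn k) = ord0 by apply/val_inj.
move=> t t' H.
case: (eqVneq (d t) (d t')) => ed.
  by rewrite (claim t t' H ed) ed; case: (d _); case: (tnth _ _).
case: (eqVneq (tnth t ord0) (tnth t' ord0)) => h0.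
  by have E := tup_ext_first H h0; rewrite E eqxx in ed.
by move: ed h0; case: (d t); case: (d t'); case: (tnth t _); case: (tnth t' _).
Qed.

Theorem mainTheorem4 (n k : nat) (hn : 1 <= n) (hk : 1 <= k)
    (d : k.+1.-tuple bool -> bool) :
  propD n d <->
  exists h : k.-1.-tuple bool -> bool,
    forall x : k.+1.-tuple bool,
      d x = tnth x ord0 (+) h [tuple nth false x i.+1 | i < k.-1] (+) tnth x ord_max.
Proof.
split.
  move=> PD; exact: (FL_FF_form hk (propD_FL hn PD) (propD_FF hn hk PD)).
move=> [h Hd].
exact: (FL_FF_propD hn (form_FL hk Hd) (form_FF hk Hd)).
Qed.
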